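(* Let $p\ge5$ be a prime. Let $F_0=0$, $F_1=1$, $F_n=F_{n-1}+F_{n-2}$ ($n\ge2$) be the Fibonacci numbers and $L_0=2$, $L_1=1$, $L_n=L_{n-1}+L_{n-2}$ ($n\ge2$) the Lucas numbers. Let $n$ be the least positive integer such that $p\mid F_n$. Then $$\sum_{j=1}^{n-1}\frac{L_j}{F_j}\equiv\frac{5(n^2-1)}{6}\cdot\frac{F_n}{L_n}\pmod{p^2}.$$
   Context: A congruence between rational numbers modulo $p^2$ means that the difference, written as a fraction whose denominator is coprime to $p$, has numerator divisible by $p^2$. *)

(* Defs.v *)
From HB Require Import structures.
From mathcomp Require Import all_boot all_order all_algebra.
Set Implicit Arguments. Unset Strict Implicit. Unset Printing Implicit Defensive.
Import Order.TTheory GRing.Theory Num.Theory.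
Local Open Scope ring_scope.

Fixpoint fib (n : nat) : nat :=
  match n with
  | 0 => 0
  | 1 => 1
  | (m.+1 as k).+1 => (fib k + fib m)%N
  end.

Fixpoint lucas (n : nat) : nat :=
  match n with
  | 0 => 2
  | 1 => 1
  | (m.+1 as k).+1 => (lucas k + lucas m)%N
  end.

Definition rat_congr (p k : nat) (x y : rat) : Prop :=
  exists (a b : int), coprime `|b|%N p /\ x - y = a%:~R / b%:~R
                      /\ (p%:Z ^+ k %| a)%Z.

(* Main.v *)
Require Import Defs.
From HB Require Import structures.
From mathcomp Require Import all_boot all_order all_algebra.
From mathcomp Require Import zify ring lra.
Import Order.TTheory GRing.Theory Num.Theory.

Lemma fibSS m : fib m.+2 = fib m.+1 + fib m. Proof. by []. Qed.
Lemma lucSS m : lucas m.+2 = lucas m.+1 + lucas m. Proof. by []. Qed.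

Lemma fl1 a : fib a + lucas a = 2 * fib a.+1 /\ lucas a + 5 * fib a = 2 * lucas a.+1.
Proof.
elim: a => [|a [IH1 IH2]]; first by [].
rewrite fibSS lucSS. lia.
Qed.

Lemma fl_add a b : 2 * fib (a + b) = fib a * lucas b + lucas a * fib b /\
                   2 * lucas (a + b) = lucas a * lucas b + 5 * fib a * fib b.
Proof.
suff: (2 * fib (a + b) = fib a * lucas b + lucas a * fib b /\
                   2 * lucas (a + b) = lucas a * lucas b + 5 * fib a * fib b) /\
      (2 * fib (a + b.+1) = fib a * lucas b.+1 + lucas a * fib b.+1 /\
                   2 * lucas (a + b.+1) = lucas a * lucas b.+1 + 5 * fib a * fib b.+1) by case.
elim: b => [|b [[IH1 IH2] [IH3 IH4]]].
  rewrite addn0 addn1 (_ : lucas 0 = 2)// (_ : fib 0 = 0)// (_ : fib 1 = 1)// (_ : lucas 1 = 1)//.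
  have [h1 h2] := fl1 a. lia.
split; [by split|].
rewrite !addnS !fibSS !lucSS.
move: IH1 IH2 IH3 IH4; rewrite !addnS. nia.
Qed.

Set Implicit Arguments. Unset Strict Implicit. Unset Printing Implicit Defensive.
Local Open Scope ring_scope.

Lemma G_shift (F : fieldType) (x y c : F) : (2 : F) != 0 -> 2 * x = y * c -> x = y * (c / 2).
Proof. by move=> t e; rewrite -[LHS](mulKf t) e; field. Qed.

Lemma G_anti (F : fieldType) (la fa lna fna : F) : fa != 0 -> fna != 0 ->
  lna * fa = - (fna * la) -> lna / fna = - (la / fa).
Proof. by move=> h1 h2 e; rewrite -[lna](mulfK h1) e; field; rewrite h1 h2. Qed.

Lemma G_add (F : fieldType) (la lb fa fb lab fab : F) : (2 : F) != 0 -> fa != 0 -> fb != 0 ->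
  fa * lb + la * fb != 0 -> 2 * fab = fa * lb + la * fb ->
  2 * lab = la * lb + 5 * fa * fb -> lab / fab * (la / fa + lb / fb) = la / fa * (lb / fb) + 5.
Proof.
move=> t h1 h2 h3 e1 e2; rewrite -[lab](mulKf t) -[fab](mulKf t) e1 e2.
by field; rewrite t h1 h2 h3.
Qed.

Lemma G_T (F : fieldType) (ln lj lnj fj fnj : F) : fj != 0 -> fnj != 0 ->
  2 * ln = lj * lnj + 5 * fj * fnj -> 2 * ln * (fj * fnj)^-1 = 5 - - (lj / fj * (lnj / fnj)).
Proof. by move=> h1 h2 e; rewrite e; field; rewrite h1 h2. Qed.

Lemma G_fin (F : fieldType) (L T P : F) (m : nat) : 2 * L * T = 5 *+ m - P ->
  5 *+ (m * m) = - P *+ 3 + 5 *+ m -> 6 * L * T = 5 * ((m.+1)%:R ^+ 2 - 1).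
Proof.
rewrite -[5 *+ m]mulr_natr -[5 *+ (m * m)]mulr_natr -[- P *+ 3]mulr_natr natrM => h2 h3.
have -> : 6 * L * T = 3 * (2 * L * T) by ring.
rewrite h2.
have h3' : 3 * P = 5 * m%:R - 5 * (m%:R * m%:R).
  by rewrite h3; ring.
rewrite mulrBr h3' -natr1; ring.
Qed.

Definition ff (p : nat) j : 'F_p := (fib j)%:R.
Definition ll (p : nat) j : 'F_p := (lucas j)%:R.
Definition vv (p : nat) j : 'F_p := ll p j / ff p j.

Lemma ff_add p a b : 2 * ff p (a+b) = ff p a * ll p b + ll p a * ff p b.
Proof.
by rewrite /ff /ll -!natrM -natrD -(fl_add a b).1 natrM.
Qed.

Lemma ll_add p a b : 2 * ll p (a+b) = ll p a * ll p b + 5 * ff p a * ff p b.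
Proof.
by rewrite /ff /ll -!natrM -natrD -(fl_add a b).2 natrM.
Qed.

Lemma ff0 p j : prime p -> (ff p j == 0) = (p %| fib j)%N.
Proof. by move=> hp; rewrite (dvdn_pcharf (pchar_Fp hp)). Qed.

Lemma natFp0 p k : prime p -> ((k%:R : 'F_p) == 0) = (p %| k)%N.
Proof. by move=> hp; rewrite (dvdn_pcharf (pchar_Fp hp)). Qed.

Definition hyp p n := [/\ prime p, (5 <= p)%N, (0 < n)%N, (p %| fib n)%N &
   forall m : nat, (0 < m)%N -> (m < n)%N -> ~~ (p %| fib m)%N].

Lemma small_nz p k : prime p -> (5 <= p)%N -> (0 < k)%N -> (k < 5)%N -> (k%:R : 'F_p) != 0.
Proof.
move=> hp hp5 k0 k5; rewrite natFp0 //; apply/negP => /dvdn_leq => /(_ k0). lia.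
Qed.

Lemma fnz p n j : hyp p n -> (0 < j)%N -> (j < n)%N -> ff p j != 0.
Proof. by case=> hp _ _ _ hm j0 jn; rewrite ff0 // hm. Qed.

Lemma fn0 p n : hyp p n -> ff p n = 0.
Proof. by case=> hp _ _ hd _; apply/eqP; rewrite ff0. Qed.

Lemma n_ge2 p n : hyp p n -> (2 <= n)%N.
Proof.
case=> hp _ n0 hd _; case: n n0 hd => [|[|n]] //= _.
by rewrite dvdn1 => /eqP p1; move: hp; rewrite p1.
Qed.

Lemma lnz p n : hyp p n -> ll p n != 0.
Proof.
move=> H; have n2 := n_ge2 H; case: (H) => hp hp5 _ _ _.
apply/eqP => l0.
have e1 := ff_add p (n.-1) 1; have e2 := ll_add p (n.-1) 1.
rewrite addn1 prednK ?(ltnW n2) // in e1 e2.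
rewrite (fn0 H) l0 in e1 e2.
have hl : ll p n.-1 = - ff p n.-1.
  apply/eqP; rewrite -subr_eq0 opprK addrC; apply/eqP.
  by rewrite -[RHS](mulr0 2) e1 /ll /ff /=; ring.
have : 4 * ff p n.-1 = 0.
  by rewrite -[RHS](mulr0 2) e2 hl /ll /ff /=; ring.
move/eqP; rewrite mulf_eq0 (negbTE (@small_nz p 4 hp hp5 _ _)) //=.
by rewrite (negbTE (fnz H _ _)) //; lia.
Qed.

Lemma two_nz p n : hyp p n -> (2 : 'F_p) != 0.
Proof. by case=> hp hp5 *; apply: (@small_nz p 2). Qed.

Lemma ff_shift p n a : hyp p n -> ff p (a + n) = ff p a * (ll p n / 2).
Proof.
move=> H; have t := two_nz H.
by apply: G_shift t _; rewrite ff_add (fn0 H) mulr0 addr0.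
Qed.

Lemma ll_shift p n a : hyp p n -> ll p (a + n) = ll p a * (ll p n / 2).
Proof.
move=> H; have t := two_nz H.
by apply: G_shift t _; rewrite ll_add (fn0 H) mulr0 addr0.
Qed.

Lemma vv_shift p n a : hyp p n -> vv p (a + n) = vv p a.
Proof.
move=> H; have c : ll p n / 2 != 0 by rewrite mulf_neq0 ?invr_eq0 ?lnz ?(two_nz H).
by rewrite /vv ff_shift // ll_shift // invfM mulrACA divff // mulr1.
Qed.

Lemma vv_anti p n a : hyp p n -> (0 < a)%N -> (a < n)%N -> vv p (n - a) = - vv p a.
Proof.
move=> H a0 an.
have fa := fnz H a0 an.
have fna : ff p (n - a) != 0 by apply: (fnz H); lia.
have e := ff_add p (n - a) a; rewrite subnK ?(ltnW an) // (fn0 H) mulr0 in e.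
have e' : ll p (n - a) * ff p a = - (ff p (n - a) * ll p a).
  by apply/eqP; rewrite -subr_eq0 opprK addrC; apply/eqP; rewrite -e.
exact: G_anti.
Qed.

Lemma vv_add p n a b : hyp p n -> ff p a != 0 -> ff p b != 0 -> ff p (a + b) != 0 ->
  vv p (a + b) * (vv p a + vv p b) = vv p a * vv p b + 5.
Proof.
move=> H fa fb fab; have t := two_nz H.
have e : ff p a * ll p b + ll p a * ff p b != 0 by rewrite -ff_add mulf_neq0.
exact: G_add (ff_add _ _ _) (ll_add _ _ _).
Qed.

Lemma fnz2 p n m : hyp p n -> (0 < m)%N -> (m < n + n)%N -> m != n -> ff p m != 0.
Proof.
move=> H m0 m2 mn; case: (ltnP m n) => h; first exact: fnz H m0 h.
have -> : m = ((m - n) + n)%N by lia.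
rewrite ff_shift //; apply: mulf_neq0; last by apply: mulf_neq0; rewrite ?invr_eq0 ?(lnz H) ?(two_nz H).
apply: (fnz H); lia.
Qed.

Lemma vv0 p : vv p 0 = 0.
Proof. by rewrite /vv /ff /= invr0 mulr0. Qed.

Lemma vvn p n : hyp p n -> vv p n = 0.
Proof. by move=> H; rewrite /vv (fn0 H) invr0 mulr0. Qed.

Lemma sumV p n : hyp p n -> \sum_(1 <= a < n) vv p a = 0.
Proof.
move=> H; set V := \sum_(1 <= a < n) vv p a.
have e : V = - V.
  rewrite {1}/V big_nat_rev /= -sumrN; apply: eq_big_nat => i /andP[i1 iN].
  have -> : (1 + n - i.+1 = n - i)%N by lia.
  by apply: (vv_anti H); lia.
have : 2 * V = 0 by rewrite mulr_natl mulr2n {1}e addNr.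
by move/eqP; rewrite mulf_eq0 (negbTE (two_nz H)) /= => /eqP.
Qed.

Lemma sumW p n a : hyp p n -> \sum_(1 <= b < n) vv p (a + b) = - vv p a.
Proof.
move=> H; have n2 := n_ge2 H.
suff : \sum_(0 <= b < n) vv p (a + b) = 0.
  by rewrite big_ltn ?(ltnW n2) // addn0 => /eqP; rewrite addrC addr_eq0 => /eqP.
elim: a => [|a IH].
  by rewrite big_ltn ?(ltnW n2) // add0n vv0 add0r (eq_big_nat _ _ (fun i _ => congr1 _ (add0n i))) (sumV H).
rewrite -[RHS]IH; case: n H n2 {IH} => [|n'] H n2 //.
rewrite [LHS]big_nat_recr // [RHS]big_nat_recl //=.
rewrite (_ : (a.+1 + n')%N = (a + n'.+1)%N); last by lia.
rewrite (vv_shift _ H) addn0 addrC; congr (_ + _); apply: eq_big_nat => i _.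
by rewrite addSnnS.
Qed.

Lemma ifsum p n a (g : nat -> 'F_p) : (0 < a)%N -> (a < n)%N ->
  \sum_(1 <= b < n) (if (a + b == n)%N then g b else 0) = g (n - a)%N.
Proof.
move=> a0 an.
rewrite (bigD1_seq (n - a)%N) /=; first last.
- exact: iota_uniq.
- rewrite mem_index_iota; lia.
rewrite subnKC ?(ltnW an) // eqxx big1 ?addr0 // => i ia.
case: ifP => // /eqP e; move: ia; rewrite -e addKn eqxx //.
Qed.

Lemma sumP p n : hyp p n ->
  5 *+ (n.-1 * n.-1) = - (\sum_(1 <= a < n) vv p a ^+ 2) *+ 3 + 5 *+ n.-1.
Proof.
move=> H; have n2 := n_ge2 H.
have pt : forall a b, (1 <= a < n)%N -> (1 <= b < n)%N -> vv p a * vv p b + 5 =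
    vv p (a + b) * (vv p a + vv p b) + (if (a + b == n)%N then vv p a * vv p b + 5 else 0).
  move=> a b /andP[a1 an] /andP[b1 bn]; case: eqP => [e|ne].
    by rewrite e (vvn H) mul0r add0r.
  rewrite addr0 (vv_add H (fnz H a1 an) (fnz H b1 bn)) //; apply: (fnz2 H); [lia|lia|exact/eqP].
have E : \sum_(1 <= a < n) \sum_(1 <= b < n) (vv p a * vv p b + 5) =
         \sum_(1 <= a < n) \sum_(1 <= b < n) (vv p (a + b) * (vv p a + vv p b) +
              (if (a + b == n)%N then vv p a * vv p b + 5 else 0)).
  by apply: eq_big_nat => a ha; apply: eq_big_nat => b hb; exact: pt.
have L : \sum_(1 <= a < n) \sum_(1 <= b < n) (vv p a * vv p b + 5) = 5 *+ (n.-1 * n.-1).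
  rewrite (eq_big_nat _ _ (fun a _ => (big_split _ _ _ _ _))) /=.
  under eq_big_nat => a _ do rewrite -mulr_sumr (sumV H) mulr0 add0r sumr_const_nat.
  by rewrite sumr_const_nat -mulrnA subn1.
have R1 : \sum_(1 <= a < n) \sum_(1 <= b < n) (vv p (a + b) * (vv p a + vv p b)) =
     - (\sum_(1 <= a < n) vv p a ^+ 2) *+ 2.
  under eq_big_nat => a _ do rewrite (eq_big_nat _ _ (fun b _ => mulrDr _ _ _)) big_split /=.
  rewrite big_split /=.
  under eq_big_nat => a _ do rewrite -mulr_suml (sumW a H).
  rewrite exchange_big_nat /=.
  have W2 : forall b, \sum_(1 <= a < n) vv p (a + b) * vv p b = - vv p b * vv p b.
    move=> b; rewrite -mulr_suml -(sumW b H); congr (_ * _); apply: eq_big_nat => a _.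
    by rewrite addnC.
  rewrite (eq_big_nat _ _ (fun b _ => W2 b)).
  by rewrite mulr2n -sumrN; congr (_ + _); apply: eq_big_nat => a _; rewrite mulNr expr2.
have R2 : \sum_(1 <= a < n) \sum_(1 <= b < n) (if (a + b == n)%N then vv p a * vv p b + 5 else 0) =
     5 *+ n.-1 - (\sum_(1 <= a < n) vv p a ^+ 2).
  transitivity (\sum_(1 <= a < n) (vv p a * vv p (n - a) + 5)).
    by apply: eq_big_nat => a /andP[a1 an]; rewrite (ifsum (fun b => vv p a * vv p b + 5)).
  rewrite big_split sumr_const_nat subn1 addrC; congr (_ + _).
  by rewrite -sumrN; apply: eq_big_nat => a /andP[a1 an]; rewrite (vv_anti H) // mulrN expr2.
rewrite -L E.
rewrite (eq_big_nat _ _ (fun a _ => big_split _ _ _ _ _)) big_split /= R1 R2.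
rewrite [in RHS]mulrSr; set P := \sum_(1 <= a < n) vv p a ^+ 2.
by rewrite (addrC (5 *+ _)) addrA.
Qed.

Lemma Tsum p n : hyp p n ->
  6 * ll p n * \sum_(1 <= j < n) (ff p j * ff p (n - j))^-1 = 5 * ((n%:R : 'F_p) ^+ 2 - 1).
Proof.
move=> H; have n2 := n_ge2 H.
set P := \sum_(1 <= a < n) vv p a ^+ 2.
have h2 : 2 * ll p n * \sum_(1 <= j < n) (ff p j * ff p (n - j))^-1 = 5 *+ n.-1 - P.
  rewrite mulr_sumr -sumrN -subn1 -sumr_const_nat -big_split /=.
  apply: eq_big_nat => j /andP[j1 jn].
  have fj := fnz H j1 jn.
  have fnj : ff p (n - j) != 0 by apply: (fnz H); lia.
  have e := ll_add p j (n - j); rewrite subnKC ?(ltnW jn) // in e.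
  have -> : vv p j ^+ 2 = - (vv p j * vv p (n - j)) by rewrite (vv_anti H) // mulrN opprK expr2.
  exact: G_T.
have h3 := sumP H; rewrite -/P in h3.
have en : (n%:R : 'F_p) = (n.-1).+1%:R by rewrite prednK // ltnW.
rewrite en; exact: G_fin h2 h3.
Qed.

Definition good (p : nat) (x : rat) (r : 'F_p) := exists a b : int,
  (b%:~R : 'F_p) != 0 /\ x = a%:~R / b%:~R /\ (a%:~R : 'F_p) = r * b%:~R.
Arguments good : clear implicits.

Lemma int_nz_rat p (b : int) : (b%:~R : 'F_p) != 0 -> (b%:~R : rat) != 0.
Proof. by apply: contra; rewrite intr_eq0 => /eqP ->. Qed.

Lemma good_nat p k : good p k%:R k%:R.
Proof.
exists k%:Z, 1; split; first by rewrite oner_neq0.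
by rewrite !rmorph1 divr1 mulr1.
Qed.

Lemma good_add p x y r s : good p x r -> good p y s -> good p (x + y) (r + s).
Proof.
move=> [a [b [hb [-> ha]]]] [c [d [hd [-> hc]]]].
exists (a * d + c * b), (b * d); split; first by rewrite rmorphM mulf_neq0.
have hb' := int_nz_rat hb; have hd' := int_nz_rat hd.
split; first by rewrite !rmorphD !rmorphM /=; field; rewrite hb' hd'.
by rewrite !rmorphD !rmorphM /= ha hc; ring.
Qed.

Lemma good_opp p x r : good p x r -> good p (- x) (- r).
Proof.
move=> [a [b [hb [-> ha]]]]; exists (- a), b; split => //.
by rewrite !rmorphN /= ha mulNr; split => //; rewrite mulNr.
Qed.

Lemma good_mul p x y r s : good p x r -> good p y s -> good p (x * y) (r * s).
Proof.
move=> [a [b [hb [-> ha]]]] [c [d [hd [-> hc]]]].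
exists (a * c), (b * d); split; first by rewrite rmorphM mulf_neq0.
have hb' := int_nz_rat hb; have hd' := int_nz_rat hd.
split; first by rewrite !rmorphM /=; field; rewrite hb' hd'.
by rewrite !rmorphM /= ha hc; ring.
Qed.

Lemma good_inv p x r : r != 0 -> good p x r -> good p x^-1 r^-1.
Proof.
move=> hr [a [b [hb [-> ha]]]].
have ha0 : (a%:~R : 'F_p) != 0 by rewrite ha mulf_neq0.
exists b, a; split => //; split; first by rewrite invf_div.
by rewrite ha mulKf.
Qed.

Lemma good_sum p n (F : nat -> rat) (G : nat -> 'F_p) :
  (forall j, (1 <= j < n)%N -> good p (F j) (G j)) ->
  good p (\sum_(1 <= j < n) F j) (\sum_(1 <= j < n) G j).
Proof.
move=> h; rewrite big_nat_cond [X in good _ _ X]big_nat_cond.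
apply: (big_rec2 (good p)); first by have := good_nat p 0; rewrite !mulr0n.
move=> j y1 y2 /andP[hj _] hy; exact: good_add (h j hj) hy.
Qed.

Lemma fib_gt0 j : (0 < j)%N -> (0 < fib j)%N.
Proof.
have h : forall k, (0 < fib k.+1)%N /\ (0 < fib k.+2)%N.
  elim => [|k [h1 h2]]; first by [].
  by split => //; rewrite fibSS; lia.
by case: j => [//|j _]; case: (h j).
Qed.

Lemma lucas_gt0 j : (0 < lucas j)%N.
Proof.
suff : (0 < lucas j)%N /\ (0 < lucas j.+1)%N by case.
elim: j => [|j [h1 h2]]; first by [].
by split => //; rewrite lucSS; lia.
Qed.

Lemma G_pair (F : fieldType) (fj fnj lj lnj fn : F) : fj != 0 -> fnj != 0 ->
  2 * fn = fj * lnj + lj * fnj -> lj / fj + lnj / fnj = 2 * fn * (fj * fnj)^-1.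
Proof. by move=> h1 h2 e; rewrite e; field; rewrite h1 h2. Qed.

Lemma G_diff (F : fieldType) (fn T c L : F) :
  fn * T - c * (fn / L) = fn * (T - c / L).
Proof. by ring. Qed.

Lemma G_solve (F : fieldType) (l T c : F) : (6 : F) != 0 -> l != 0 -> 6 * l * T = c -> T - c / 6 / l = 0.
Proof. by move=> h1 h2 <-; field; rewrite h1 h2. Qed.

Lemma fibQ j : (0 < j)%N -> ((fib j)%:R : rat) != 0.
Proof. by move=> j0; rewrite pnatr_eq0 -lt0n fib_gt0. Qed.

Lemma sum_pair n : (0 < n)%N ->
  \sum_(1 <= j < n) ((lucas j)%:R / (fib j)%:R : rat) =
  (fib n)%:R * \sum_(1 <= j < n) ((fib j)%:R * (fib (n - j))%:R : rat)^-1.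
Proof.
move=> n0.
set x := \sum_(1 <= j < n) _.
have e : x + x = 2 * ((fib n)%:R * \sum_(1 <= j < n) ((fib j)%:R * (fib (n - j))%:R : rat)^-1).
  rewrite {2}/x big_nat_rev /= /x -big_split /= mulr_sumr mulr_sumr.
  apply: eq_big_nat => j /andP[j1 jn].
  rewrite (_ : (1 + n - j.+1 = n - j)%N); last by lia.
  rewrite mulrA; apply: G_pair; rewrite ?fibQ //; try lia.
  have := (fl_add j (n - j)).1; rewrite subnKC ?(ltnW jn) // => e.
  by rewrite -!natrM -natrD -e natrM.
have t : (2 : rat) != 0 by [].
by apply: (mulfI t); rewrite -e; ring.
Qed.

Unset Implicit Arguments.

Lemma six_nz p : prime p -> (5 <= p)%N -> (6 : 'F_p) != 0.
Proof.
move=> hp hp5; rewrite (_ : 6 = 2 * 3); last by rewrite -natrM.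
by rewrite mulf_neq0 // (@small_nz p _ hp hp5).
Qed.

Theorem corollary1p2 (p n : nat) (hp : prime p) (hp5 : (5 <= p)%N)
  (hn : (0 < n)%N) (hdiv : (p %| fib n)%N)
  (hmin : forall m : nat, (0 < m)%N -> (m < n)%N -> ~~ (p %| fib m)%N) :
  rat_congr p 2
    (\sum_(1 <= j < n) ((lucas j)%:R / (fib j)%:R : rat))
    ((5 * (n%:R ^+ 2 - 1) / 6) * ((fib n)%:R / (lucas n)%:R)).
Proof.
have H : hyp p n by split.
set T := \sum_(1 <= j < n) ((fib j)%:R * (fib (n - j))%:R : rat)^-1.
have gT : good p T (\sum_(1 <= j < n) (ff p j * ff p (n - j))^-1).
  apply: good_sum => j /andP[j1 jn].
  apply: good_inv; first by rewrite mulf_neq0 // (fnz H) //; lia.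
  exact: good_mul (good_nat p _) (good_nat p _).
have g5 : good p 5 5 := good_nat p 5.
have g6 : good p 6 6 := good_nat p 6.
have g1 : good p 1 1 by have := good_nat p 1; rewrite !mulr1n.
have gn : good p (n%:R) (n%:R) := good_nat p n.
have gc : good p (5 * (n%:R ^+ 2 - 1) / 6 / (lucas n)%:R) (5 * (n%:R ^+ 2 - 1) / 6 / ll p n).
  apply: good_mul; last by apply: good_inv; [exact: lnz | exact: good_nat].
  apply: good_mul; last by apply: good_inv; [exact: six_nz | exact: g6].
  apply: good_mul g5 _; apply: good_add; last exact: good_opp g1.
  by rewrite !expr2; apply: good_mul.
have := good_add gT (good_opp gc).
rewrite (G_solve _ _ (Tsum H)); first last.
- exact: lnz.
- exact: six_nz.
case=> a [b [hb [e ha]]].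
rewrite mul0r in ha.
exists ((fib n)%:Z * a)%R, b; split.
  rewrite coprime_sym prime_coprime //.
  by move: hb; rewrite -(dvdz_pcharf (pchar_Fp hp)).
split.
  by rewrite sum_pair // G_diff -/T e rmorphM /= mulrA.
rewrite expr2; apply: dvdz_mul; first exact: hdiv.
by rewrite (dvdz_pcharf (pchar_Fp hp)) ha.
Qed.
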